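(* Let $\mathcal U,\mathcal V,\mathcal X$ be real finite-dimensional Euclidean spaces, $f:\mathcal U\to(-\infty,+\infty]$ closed proper convex, $g(v)=\frac12\langle v,\Sigma_g v\rangle-\langle b,v\rangle$ with $\Sigma_g\succeq0$ self-adjoint and $b\in\mathcal V$, $\mathcal F:\mathcal X\to\mathcal U$, $\mathcal G:\mathcal X\to\mathcal V$ linear, $c\in\mathcal X$, $\sigma>0$, and $\mathcal L_\sigma(u,v;x)=f(u)+g(v)+\langle x,\mathcal F^*u+\mathcal G^*v-c\rangle+\frac\sigma2\|\mathcal F^*u+\mathcal G^*v-c\|^2$. Let $\mathcal E_g\succ0$ be self-adjoint with $\mathcal E_g\succeq\sigma^{-1}\Sigma_g+\mathcal G\mathcal G^*$, $\mathcal T_g:=\mathcal E_g-\sigma^{-1}\Sigma_g-\mathcal G\mathcal G^*$, $\mathcal T_f\succeq 0$ self-adjoint on $\mathcal U$, $\widehat{\mathcal T}_f:=\mathcal T_f+\mathcal F\mathcal G^*\mathcal E_g^{-1}\mathcal G\mathcal F^*$. Let $\bar u\in\mathcal U,\bar v\in\mathcal V,\bar x\in\mathcal X$, $\bar c:=c-\mathcal F^*\bar u-\mathcal G^*\bar v$, $\bar\delta_g:=\mathcal F\mathcal G^*\mathcal E_g^{-1}(b-\mathcal G\bar x-\Sigma_g\bar v+\sigma\mathcal G\bar c)$, $\bar\alpha:=\sigma^{-1}b+\mathcal T_g\bar v+\mathcal G(c-\sigma^{-1}\bar x)$, and $$v':=\operatorname{argmin}_v\ \mathcal L_\sigma(\bar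 u,v;\bar x)+\tfrac\sigma2\|v-\bar v\|^2_{\mathcal T_g}=\mathcal E_g^{-1}(\bar\alpha-\mathcal G\mathcal F^*\bar u).$$ Let $(u^+,v^+)$ be the optimal solution of $$\min_{u,v}\ \mathcal L_\sigma(u,v;\bar x)+\tfrac\sigma2\|u-\bar u\|^2_{\widehat{\mathcal T}_f}+\tfrac\sigma2\|v-\bar v\|^2_{\mathcal T_g}.$$ Then $(u^+,v^+)$ is generated exactly by the procedure $$u^+=\operatorname{argmin}_u\ \mathcal L_\sigma(u,\bar v;\bar x)+\langle\bar\delta_g,u\rangle+\tfrac\sigma2\|u-\bar u\|^2_{\mathcal T_f},\qquad v^+=\operatorname{argmin}_v\ \mathcal L_\sigma(u^+,v;\bar x)+\tfrac\sigma2\|v-\bar v\|^2_{\mathcal T_g}=\mathcal E_g^{-1}(\bar\alpha-\mathcal G\mathcal F^*u^+),$$ and equivalently also by the procedure $$u^+=\operatorname{argmin}_u\ \mathcal L_\sigma(u,v';\bar x)+\tfrac\sigma2\|u-\bar u\|^2_{\mathcal T_f},\qquad v^+=\operatorname{argmin}_v\ \mathcal L_\sigma(u^+,v;\bar x)+\tfrac\sigma2\|v-\bar v\|^2_{\mathcal T_g}=\mathcal E_g^{-1}(\bar\alpha-\mathcal G\mathcal F^*u^+).$$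
   Context: $\|w\|_{\mathcal T}^2:=\langle w,\mathcal T w\rangle$; $\succ0$/$\succeq0$ denote positive definite/semidefinite; $\mathcal A\succeq\mathcal B$ means $\mathcal A-\mathcal B\succeq0$. *)

(* Defs.v *)
(* Finite-dimensional Euclidean spaces U, V, X are modelled as column-vector
   spaces 'cV[R]_m, 'cV[R]_n, 'cV[R]_p (R : realType) with the standard inner
   product; linear maps are matrices, adjoints are transposes. *)
From HB Require Import structures.
From mathcomp Require Import all_boot all_order all_algebra.
From mathcomp Require Import all_classical all_reals all_analysis.
Set Implicit Arguments. Unset Strict Implicit. Unset Printing Implicit Defensive.
Import Order.TTheory GRing.Theory Num.Theory.
Local Open Scope ring_scope.
Local Open Scope classical_set_scope.

Section Defs.
Variable R : realType.

Definition dotv (k : nat) (u w : 'cV[R]_k) : R := \sum_(i < k) u i 0 * w i 0.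

Definition qnorm (k : nat) (T : 'M[R]_k) (w : 'cV[R]_k) : R := dotv w (T *m w).

Definition selfadjoint (k : nat) (A : 'M[R]_k) : Prop := A^T = A.
Definition psd (k : nat) (A : 'M[R]_k) : Prop :=
  selfadjoint A /\ forall w : 'cV[R]_k, 0 <= qnorm A w.
Definition pd (k : nat) (A : 'M[R]_k) : Prop :=
  selfadjoint A /\ forall w : 'cV[R]_k, w != 0 -> 0 < qnorm A w.

Definition proper_fun (k : nat) (f : 'cV[R]_k -> \bar R) : Prop :=
  (forall u, f u != -oo%E) /\ exists u, f u \is a fin_num.

Definition convex_fun (k : nat) (f : 'cV[R]_k -> \bar R) : Prop :=
  forall (a b : 'cV[R]_k) (t : R), 0 < t < 1 ->
    let w := (t *: a + (1 - t) *: b)%R in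
    (f w <= t%:E * f a + (1 - t)%:E * f b)%E.

(* closed = lower semicontinuous = all sublevel sets closed *)
Definition closed_fun (k : nat) (f : 'cV[R]_k -> \bar R) : Prop :=
  forall r : R, closed ([set u | (f u <= r%:E)%E] : set 'cV[R^o]_k).

Definition is_argmin (T : Type) (phi : T -> \bar R) (z : T) : Prop :=
  forall y, (phi z <= phi y)%E.

Definition gquad (n : nat) (Sg : 'M[R]_n) (b : 'cV[R]_n) (v : 'cV[R]_n) : R :=
  2^-1 * dotv v (Sg *m v) - dotv b v.

Definition Lag (m n p : nat) (f : 'cV[R]_m -> \bar R) (Sg : 'M[R]_n)
  (b : 'cV[R]_n) (F : 'M[R]_(m, p)) (G : 'M[R]_(n, p)) (c : 'cV[R]_p)
  (sigma : R) (u : 'cV[R]_m) (v : 'cV[R]_n) (x : 'cV[R]_p) : \bar R :=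
  let r := F^T *m u + G^T *m v - c in
  let s : R := (gquad Sg b v + dotv x r + sigma / 2 * dotv r r)%R in
  (f u + s%:E)%E.

End Defs.

(* Main.v *)
Require Import Defs.
From HB Require Import structures.
From mathcomp Require Import all_boot all_order all_algebra.
From mathcomp Require Import all_classical all_reals all_analysis.
From mathcomp Require Import ring lra.
Import Order.TTheory GRing.Theory Num.Theory.
Local Open Scope ring_scope.

Section Alg.
Variable R : realType.

Lemma dotvE k (u w : 'cV[R]_k) : dotv u w = (u^T *m w) 0 0.
Proof. by rewrite /dotv !mxE; apply: eq_bigr => i _; rewrite mxE. Qed.
Lemma dotvDl k (u1 u2 w : 'cV[R]_k) : dotv (u1 + u2) w = dotv u1 w + dotv u2 w.
Proof. by rewrite /dotv -big_split; apply: eq_bigr => i _; rewrite mxE mulrDl. Qed.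
Lemma dotvC k (u w : 'cV[R]_k) : dotv u w = dotv w u.
Proof. by rewrite /dotv; apply: eq_bigr => i _; rewrite mulrC. Qed.
Lemma dotvDr k (u w1 w2 : 'cV[R]_k) : dotv u (w1 + w2) = dotv u w1 + dotv u w2.
Proof. by rewrite dotvC dotvDl !(dotvC _ u). Qed.
Lemma dotvZl k a (u w : 'cV[R]_k) : dotv (a *: u) w = a * dotv u w.
Proof. by rewrite /dotv mulr_sumr; apply: eq_bigr => i _; rewrite mxE mulrA. Qed.
Lemma dotvZr k a (u w : 'cV[R]_k) : dotv u (a *: w) = a * dotv u w.
Proof. by rewrite dotvC dotvZl dotvC. Qed.
Lemma dotvNl k (u w : 'cV[R]_k) : dotv (- u) w = - dotv u w.
Proof. by rewrite -scaleN1r dotvZl mulN1r. Qed.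
Lemma dotvNr k (u w : 'cV[R]_k) : dotv u (- w) = - dotv u w.
Proof. by rewrite dotvC dotvNl dotvC. Qed.
Lemma dotvBl k (u1 u2 w : 'cV[R]_k) : dotv (u1 - u2) w = dotv u1 w - dotv u2 w.
Proof. by rewrite dotvDl dotvNl. Qed.
Lemma dotvBr k (u w1 w2 : 'cV[R]_k) : dotv u (w1 - w2) = dotv u w1 - dotv u w2.
Proof. by rewrite dotvDr dotvNr. Qed.
Lemma dotv0l k (w : 'cV[R]_k) : dotv 0 w = 0.
Proof. by rewrite /dotv big1 // => i _; rewrite mxE mul0r. Qed.
Lemma dotv0r k (w : 'cV[R]_k) : dotv w 0 = 0.
Proof. by rewrite dotvC dotv0l. Qed.
Lemma dotv_mul k l (A : 'M[R]_(k, l)) u w : dotv u (A *m w) = dotv (A^T *m u) w.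
Proof. by rewrite !dotvE trmx_mul trmxK mulmxA. Qed.
Lemma dotv_sym k (A : 'M[R]_k) u w : A^T = A -> dotv u (A *m w) = dotv w (A *m u).
Proof. by move=> hA; rewrite dotv_mul hA dotvC. Qed.

Lemma trmx_lin k l (A B : 'M[R]_(k, l)) a : (A - a *: B)^T = A^T - a *: B^T.
Proof. by rewrite linearB linearZ. Qed.

End Alg.
Arguments dotvE {R k}. Arguments dotvDl {R k}. Arguments dotvDr {R k}. Arguments dotvC {R k}.
Arguments dotvZl {R k}. Arguments dotvZr {R k}. Arguments dotvNl {R k}. Arguments dotvNr {R k}.
Arguments dotvBl {R k}. Arguments dotvBr {R k}. Arguments dotv0l {R k}. Arguments dotv0r {R k}.
Arguments dotv_mul {R k l}. Arguments dotv_sym {R k}.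

Ltac mexp1 := first [ rewrite mulmxDr | rewrite mulmxDl | rewrite mulmxBr | rewrite mulmxBl
  | rewrite mulmxN | rewrite mulNmx | rewrite mulmxA | rewrite scalerDr | rewrite scalerBr
  | rewrite scalerN | rewrite scalerA | rewrite -scalemxAl | rewrite -scalemxAr ].
Ltac mexp := repeat mexp1.
Ltac mfield := apply/matrixP => i j; rewrite !mxE; field; done.

Section A.
Variable R : realType.
Variables (m n p : nat) (Sg : 'M[R]_n) (b : 'cV[R]_n) (F : 'M[R]_(m,p)) (G : 'M[R]_(n,p))
  (c xb : 'cV[R]_p) (sigma : R) (Eg : 'M[R]_n) (vb : 'cV[R]_n) (ub : 'cV[R]_m).
Hypotheses (hs : sigma != 0) (hSg : Sg^T = Sg) (hEg : Eg^T = Eg) (hEu : Eg \in unitmx).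

Definition Tg := Eg - sigma^-1 *: Sg - G *m G^T.
Definition alpha := sigma^-1 *: b + Tg *m vb + G *m (c - sigma^-1 *: xb).
Definition vf u := invmx Eg *m (alpha - G *m F^T *m u).

Lemma Evf u : Eg *m vf u = alpha - G *m F^T *m u.
Proof. by rewrite /vf mulmxA mulmxV // mul1mx. Qed.

Lemma gradE u : Sg *m vf u - b + G *m xb + sigma *: (G *m (F^T *m u + G^T *m vf u - c))
   + sigma *: (Tg *m (vf u - vb)) = 0.
Proof.
have := Evf u; move: (vf u) => v0 Ev0.
rewrite /Tg; mexp. rewrite Ev0 /alpha /Tg; mexp. mfield.
Qed.


Lemma hTg : Tg^T = Tg.
Proof. by rewrite /Tg !linearB linearZ /= hEg hSg trmx_mul trmxK. Qed.

Definition sL u v := let r := F^T *m u + G^T *m v - c in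
  gquad Sg b v + dotv xb r + sigma / 2 * dotv r r.
Definition sR u v := sL u v + sigma / 2 * qnorm Tg (v - vb).

Ltac dexp1 := first [ rewrite dotvDl | rewrite dotvDr | rewrite dotvBl | rewrite dotvBr
  | rewrite dotvNl | rewrite dotvNr | rewrite dotvZl | rewrite dotvZr ].
Ltac dexp := repeat dexp1.

Lemma sqA u v : sR u v = sR u (vf u) + sigma / 2 * qnorm Eg (v - vf u).
Proof.
have G0 := gradE u; move: (vf u) G0 => v0 G0.
have -> : v = (v - v0) + v0 by rewrite subrK.
move: (v - v0) => w.
rewrite /sR /sL /gquad /qnorm /=.
have -> : F^T *m u + G^T *m (w + v0) - c = (F^T *m u + G^T *m v0 - c) + G^T *m w.
  by mexp; mfield.
have -> : w + v0 - vb = w + (v0 - vb) by rewrite addrA.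
move: G0; set r0 := F^T *m u + G^T *m v0 - c; set d := v0 - vb => G0.
clearbody r0 d.
have h4 : dotv w (Eg *m w) = dotv w (Tg *m w) + sigma^-1 * dotv w (Sg *m w)
   + dotv (G^T *m w) (G^T *m w).
  have -> : Eg *m w = Tg *m w + sigma^-1 *: (Sg *m w) + G *m (G^T *m w).
    by rewrite /Tg; mexp; mfield.
  by dexp; rewrite (dotv_mul G).
have h5 : dotv w (Sg *m v0) - dotv b w + dotv xb (G^T *m w) + sigma * dotv r0 (G^T *m w)
   + sigma * dotv w (Tg *m d) = 0.
  have := congr1 (dotv w) G0; rewrite dotv0r; dexp.
  by rewrite (dotvC w b) !(dotv_mul G) (dotvC _ xb) (dotvC _ r0).
have h5' : dotv w (Sg *m v0) = dotv b w - dotv xb (G^T *m w) - sigma * dotv r0 (G^T *m w)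
   - sigma * dotv w (Tg *m d) by lra.
rewrite addrK h4 !mulmxDr; dexp.
rewrite (dotv_sym Sg v0 w hSg) (dotv_sym Tg d w hTg) (dotvC (G^T *m w) r0) h5'.
by field.
Qed.


Definition dg := F *m G^T *m invmx Eg *m
   (b - G *m xb - Sg *m vb + sigma *: (G *m (c - F^T *m ub - G^T *m vb))).
Definition ee := vf ub - vb.

Lemma dgE : dg = sigma *: (F *m (G^T *m ee)).
Proof.
rewrite /dg.
have -> : b - G *m xb - Sg *m vb + sigma *: (G *m (c - F^T *m ub - G^T *m vb))
   = Eg *m (sigma *: ee).
  rewrite /ee; have := Evf ub; move: (vf ub) => v0 Ev0.
  mexp; rewrite Ev0 /alpha /Tg; mexp; mfield.
rewrite -!mulmxA (mulmxA (invmx Eg)) mulVmx // mul1mx.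
by rewrite -!scalemxAr.
Qed.

Lemma vf_lin u : vf u = vf ub - invmx Eg *m (G *m (F^T *m (u - ub))).
Proof. by rewrite /vf; mexp; mfield. Qed.

Lemma hK : (invmx Eg)^T = invmx Eg.
Proof. by rewrite trmx_inv hEg. Qed.

Lemma qEy z : qnorm Eg (invmx Eg *m (G *m (F^T *m z)))
   = qnorm (F *m G^T *m invmx Eg *m G *m F^T) z.
Proof.
rewrite /qnorm (mulmxA Eg (invmx Eg)) mulmxV // mul1mx dotvC.
have -> : F *m G^T *m invmx Eg *m G *m F^T *m z
   = F *m (G^T *m (invmx Eg *m (G *m (F^T *m z)))) by rewrite !mulmxA.
by rewrite dotv_mul dotv_mul trmxK.
Qed.

Lemma dEy z : dotv (invmx Eg *m (G *m (F^T *m z))) (Eg *m ee) = dotv z (F *m (G^T *m ee)).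
Proof.
by rewrite dotv_mul hEg (mulmxA Eg (invmx Eg)) mulmxV // mul1mx dotv_mul dotv_mul trmxK.
Qed.

Variable Tf : 'M[R]_m.

Lemma sR0 u : sR u vb = sL u vb.
Proof. by rewrite /sR /qnorm subrr mulmx0 dotv0l mulr0 addr0. Qed.

Lemma keyB1 u : sR u (vf u) + sigma / 2 * qnorm (Tf + F *m G^T *m invmx Eg *m G *m F^T) (u - ub)
  = (sL u vb + dotv dg u + sigma / 2 * qnorm Tf (u - ub))
    + (- (sigma / 2 * qnorm Eg ee) - dotv dg ub).
Proof.
rewrite -sR0 (sqA u vb) (vf_lin u).
have -> : vb - (vf ub - invmx Eg *m (G *m (F^T *m (u - ub))))
   = invmx Eg *m (G *m (F^T *m (u - ub))) - ee by rewrite /ee; mexp; mfield.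
have [z ->] : exists z, u = ub + z by exists (u - ub); rewrite addrC subrK.
have Ez : ub + z - ub = z by rewrite addrC addKr.
rewrite Ez.
have E1 := qEy z. have E2 := dEy z.
move: (invmx Eg *m (G *m (F^T *m z))) E1 E2 => y E1 E2.
rewrite /qnorm mulmxDl !dotvDr.
rewrite /qnorm in E1; rewrite -E1.
rewrite dgE; move: ee E2 => e E2; rewrite !mulmxBr; dexp.
rewrite (dotv_sym Eg e y hEg) E2 (dotvC (F *m (G^T *m e)) z).
by field.
Qed.

Lemma keyB2 u : sL u (vf ub) + sigma / 2 * qnorm Tf (u - ub)
  = (sL u vb + dotv dg u + sigma / 2 * qnorm Tf (u - ub))
    + (- (sigma / 2 * qnorm Eg ee) - dotv dg ub - sigma / 2 * qnorm Tg ee).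
Proof.
have H1 : sL u (vf ub) = sR u (vf ub) - sigma / 2 * qnorm Tg ee by rewrite /sR /ee addrK.
rewrite H1 -sR0 (sqA u vb) (sqA u (vf ub)) (vf_lin u).
have -> : vb - (vf ub - invmx Eg *m (G *m (F^T *m (u - ub))))
   = invmx Eg *m (G *m (F^T *m (u - ub))) - ee by rewrite /ee; mexp; mfield.
have -> : vf ub - (vf ub - invmx Eg *m (G *m (F^T *m (u - ub))))
   = invmx Eg *m (G *m (F^T *m (u - ub))) by rewrite opprB addrC subrK.
have [z ->] : exists z, u = ub + z by exists (u - ub); rewrite addrC subrK.
have Ez : ub + z - ub = z by rewrite addrC addKr.
rewrite Ez.
have E2 := dEy z.
move: (invmx Eg *m (G *m (F^T *m z))) E2 => y E2.
rewrite /qnorm.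
rewrite dgE; move: ee E2 => e E2; rewrite !mulmxBr; dexp.
rewrite (dotv_sym Eg e y hEg) E2 (dotvC (F *m (G^T *m e)) z).
by field.
Qed.

End A.

Section Abs.
Variable R : realType.
Local Open Scope ereal_scope.

Lemma EFinA (x : \bar R) (a b : R) : x + (a + b)%:E = (x + a%:E) + b%:E.
Proof. by rewrite EFinD addeA. Qed.

Lemma argmin_fin (T : Type) (f : T -> \bar R) (a : T -> R) u :
  (forall x, f x != -oo) -> (exists x0, f x0 \is a fin_num) ->
  is_argmin (fun x => f x + (a x)%:E) u -> f u \is a fin_num.
Proof.
move=> hf [x0 h0] /(_ x0) H.
rewrite fin_numE hf /=; apply/negP => /eqP fu.
rewrite fu /= in H.
by move: h0 H; case: (f x0).
Qed.

Lemma argmin_shift (T : Type) (f : T -> \bar R) (a : T -> R) (k : R) u :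
  is_argmin (fun x => f x + (a x + k)%:E) u <-> is_argmin (fun x => f x + (a x)%:E) u.
Proof.
split => H y; have := H y; rewrite !EFinA leeD2rE //.
Qed.

Lemma argmin_joint (T U : Type) (f : T -> \bar R) (a : T -> R) (q : T -> U -> R)
  (vf : T -> U) :
  (forall x, f x != -oo) -> (exists x0, f x0 \is a fin_num) ->
  (forall x y, (0 <= q x y)%R) -> (forall x, q x (vf x) = 0%R) ->
  (forall x y, q x y = 0%R -> y = vf x) ->
  forall u v, is_argmin (fun uv : T * U => f uv.1 + (a uv.1 + q uv.1 uv.2)%:E) (u, v) <->
    (is_argmin (fun x => f x + (a x)%:E) u /\ v = vf u).
Proof.
move=> hf hex hq hq0 hqe u v; split.
- move=> H.
  have Hp : is_argmin (fun x => f x + (a x)%:E) u.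
    move=> y; apply: (le_trans _ (le_trans (H (y, vf y)) _)) => /=.
      by apply: leeD2l; rewrite lee_fin -[X in (X <= _)%R]addr0 lerD2l hq.
    by rewrite hq0 addr0.
  split => //.
  have fin := @argmin_fin _ f a u hf hex Hp.
  apply: hqe; apply/eqP; rewrite eq_le hq andbT.
  have := H (u, vf u); rewrite /= hq0 addr0 leeD2lE // lee_fin.
  by rewrite -[X in (_ <= X)%R]addr0 lerD2l.
- case=> Hp -> [y1 y2] /=.
  rewrite hq0 addr0; apply: (le_trans (Hp y1)).
  by apply: leeD2l; rewrite lee_fin -[X in (X <= _)%R]addr0 lerD2l hq.
Qed.

End Abs.

Lemma pd_unit (R : realType) k (E : 'M[R]_k) : pd E -> E \in unitmx.
Proof.
case=> hE hp; rewrite unitmxE unitfE; apply/negP => /det0P [v nz hv].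
have := hp v^T; rewrite trmx_eq0 nz => /(_ isT).
by rewrite /qnorm -hE -trmx_mul hv trmx0 dotv0r ltxx.
Qed.

Lemma argmin_ext (R : realType) (T : Type) (phi psi : T -> \bar R) z :
  (forall y, phi y = psi y) -> is_argmin phi z <-> is_argmin psi z.
Proof. by move=> e; split => H y; have := H y; rewrite !e. Qed.

Theorem proposition2p2 (R : realType) (m n p : nat)
  (f : 'cV[R]_m -> \bar R) (Sg : 'M[R]_n) (b : 'cV[R]_n)
  (F : 'M[R]_(m, p)) (G : 'M[R]_(n, p)) (c : 'cV[R]_p) (sigma : R)
  (Eg : 'M[R]_n) (Tf : 'M[R]_m)
  (ub : 'cV[R]_m) (vb : 'cV[R]_n) (xb : 'cV[R]_p) :
  closed_fun f -> proper_fun f -> convex_fun f ->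
  psd Sg -> 0 < sigma ->
  pd Eg -> psd (Eg - sigma^-1 *: Sg - G *m G^T) ->
  psd Tf ->
  let L := Lag f Sg b F G c sigma in
  let Tg := Eg - sigma^-1 *: Sg - G *m G^T in
  let Tfh := Tf + F *m G^T *m invmx Eg *m G *m F^T in
  let cbar := c - F^T *m ub - G^T *m vb in
  let dg := F *m G^T *m invmx Eg *m
              (b - G *m xb - Sg *m vb + sigma *: (G *m cbar)) in
  let alpha := sigma^-1 *: b + Tg *m vb + G *m (c - sigma^-1 *: xb) in
  let vsub := fun (u : 'cV[R]_m) (v : 'cV[R]_n) =>
                (L u v xb + (sigma / 2 * qnorm Tg (v - vb))%:E)%E in
  let vformula := fun u : 'cV[R]_m => invmx Eg *m (alpha - G *m F^T *m u) in
  let v' := vformula ub in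
  let joint := fun uv : 'cV[R]_m * 'cV[R]_n =>
                (L uv.1 uv.2 xb + (sigma / 2 * qnorm Tfh (uv.1 - ub)
                                  + sigma / 2 * qnorm Tg (uv.2 - vb))%:E)%E in
  let proc1 := fun u : 'cV[R]_m =>
                (L u vb xb + (dotv dg u + sigma / 2 * qnorm Tf (u - ub))%:E)%E in
  let proc2 := fun u : 'cV[R]_m =>
                (L u v' xb + (sigma / 2 * qnorm Tf (u - ub))%:E)%E in
  (forall u v, f u \is a fin_num -> (is_argmin (vsub u) v <-> v = vformula u)) /\
  (forall up vp, is_argmin joint (up, vp) <->
     [/\ is_argmin proc1 up, is_argmin (vsub up) vp & vp = vformula up]) /\
  (forall up vp, is_argmin joint (up, vp) <->
     [/\ is_argmin proc2 up, is_argmin (vsub up) vp & vp = vformula up]).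
Proof.
move=> _ [hninf hex] _ [hSgT _] hs [hEgT hEpd] _ _ L Tg0 Tfh cbar dg0 alpha0 vsub
  vformula v' joint proc1 proc2.
have hs0 : sigma != 0 by rewrite gt_eqF.
have hEu : Eg \in unitmx by apply: pd_unit.
pose SR := sR R m n p Sg b F G c xb sigma Eg vb.
pose SL := sL R m n p Sg b F G c xb sigma.
pose VF := vf R m n p Sg b F G c xb sigma Eg vb.
pose K1 := - (sigma / 2 * qnorm Eg (ee R m n p Sg b F G c xb sigma Eg vb ub))
   - dotv (dg R m n p Sg b F G c xb sigma Eg vb ub) ub.
pose K2 := K1 - sigma / 2 * qnorm (Tg R n p Sg G sigma Eg)
   (ee R m n p Sg b F G c xb sigma Eg vb ub).
pose P1 := fun u => SL u vb + dotv (dg R m n p Sg b F G c xb sigma Eg vb ub) u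
   + sigma / 2 * qnorm Tf (u - ub).
pose P2 := fun u => SL u (VF ub) + sigma / 2 * qnorm Tf (u - ub).
pose A := fun u => SR u (VF u) + sigma / 2 * qnorm Tfh (u - ub).
have HA : forall u v, SR u v = SR u (VF u) + sigma / 2 * qnorm Eg (v - VF u) :=
  sqA R m n p Sg b F G c xb sigma Eg vb hs0 hSgT hEgT hEu.
have HB1 : forall u, A u = P1 u + K1 :=
  keyB1 R m n p Sg b F G c xb sigma Eg vb ub hs0 hSgT hEgT hEu Tf.
have HB2 : forall u, P2 u = P1 u + K2 :=
  keyB2 R m n p Sg b F G c xb sigma Eg vb ub hs0 hSgT hEgT hEu Tf.
have hs2 : 0 < sigma / 2 by rewrite divr_gt0.
have qge0 : forall w, 0 <= qnorm Eg w.
  move=> w; case: (eqVneq w 0) => [->|nz]; first by rewrite /qnorm mulmx0 dotv0r.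
  exact: ltW (hEpd w nz).
have qeq0 : forall w, qnorm Eg w = 0 -> w = 0.
  move=> w h; apply/eqP; case: (eqVneq w 0) => // nz; have := hEpd w nz; by rewrite h ltxx.
have Evsub : forall u v, vsub u v = (f u + (SR u v)%:E)%E.
  by move=> u v; rewrite /vsub /L /Lag /= -EFinA.
have Ejoint : forall uv, joint uv =
    (f uv.1 + (A uv.1 + sigma / 2 * qnorm Eg (uv.2 - VF uv.1))%:E)%E.
  move=> [u v]; rewrite /joint /L /Lag /= -EFinA.
  rewrite /A [X in _ = (_ + X%:E)%E]addrAC -HA.
  by rewrite [X in (_ + X%:E)%E = _]addrA [X in (_ + X%:E)%E = _]addrAC.
have Eproc1 : forall u, proc1 u = (f u + (P1 u)%:E)%E.
  by move=> u; rewrite /proc1 /L /Lag /= -EFinA addrA.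
have Eproc2 : forall u, proc2 u = (f u + (P2 u)%:E)%E.
  by move=> u; rewrite /proc2 /L /Lag /= -EFinA.
have part1 : forall u v, f u \is a fin_num -> (is_argmin (vsub u) v <-> v = vformula u).
  move=> u v hfin; split.
  - move=> /(_ (VF u)); rewrite !Evsub leeD2lE // lee_fin (HA u v) gerDl pmulr_rle0 // => hq.
    apply/eqP; rewrite -subr_eq0; apply/eqP; apply: qeq0.
    by apply/eqP; rewrite eq_le hq qge0.
  - move=> -> y; rewrite !Evsub leeD2lE // lee_fin (HA u y).
    have -> : vformula u = VF u by [].
    by rewrite lerDl mulr_ge0 // ltW.
have Hj : forall up vp, is_argmin joint (up, vp) <->
    (is_argmin (fun x => (f x + (A x)%:E)%E) up /\ vp = VF up).
  move=> up vp; apply: iff_trans (@argmin_ext R _ _ _ (up, vp) Ejoint) _.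
  apply: (@argmin_joint R _ _ f A (fun u v => sigma / 2 * qnorm Eg (v - VF u))) => //.
  - by move=> x y; rewrite mulr_ge0 // ltW.
  - by move=> x; rewrite subrr /qnorm mulmx0 dotv0r mulr0.
  - move=> x y /eqP; rewrite mulf_eq0 (gt_eqF hs2) /= => /eqP /qeq0 /eqP.
    by rewrite subr_eq0 => /eqP.
have HP1 : forall u, is_argmin (fun x => (f x + (A x)%:E)%E) u <-> is_argmin proc1 u.
  move=> u; apply: iff_trans (_ : _ <-> is_argmin (fun x => (f x + (P1 x + K1)%:E)%E) u) _.
    by apply: argmin_ext => y; rewrite HB1.
  apply: iff_trans (@argmin_shift R _ f P1 K1 u) _.
  by apply: argmin_ext => y; rewrite Eproc1.
have HP2 : forall u, is_argmin (fun x => (f x + (A x)%:E)%E) u <-> is_argmin proc2 u.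
  move=> u.
  have HB3 : forall x, A x = P2 x + (K1 - K2) by move=> x; rewrite HB1 HB2; ring.
  apply: iff_trans (_ : _ <-> is_argmin (fun x => (f x + (P2 x + (K1 - K2))%:E)%E) u) _.
    by apply: argmin_ext => y; rewrite HB3.
  apply: iff_trans (@argmin_shift R _ f P2 (K1 - K2) u) _.
  by apply: argmin_ext => y; rewrite Eproc2.
have fin : forall u, is_argmin (fun x => (f x + (A x)%:E)%E) u -> f u \is a fin_num.
  by move=> u; apply: argmin_fin.
split; first exact: part1.
split => up vp; apply: iff_trans (Hj up vp) _.
- split.
  + case=> H1 H2; split; last exact: H2.
    * by apply/HP1.
    * by apply/part1; [exact: fin | exact: H2].
  + by case=> /HP1 H1 _ H3.
- split.
  + case=> H1 H2; split; last exact: H2.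
    * by apply/HP2.
    * by apply/part1; [exact: fin | exact: H2].
  + by case=> /HP2 H1 _ H3.
Qed.
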